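(* Let $(V,\|\cdot\|)$ be a normed plane and let $x,y\in V$ be distinct points such that $[xy]$ is parallel to a nondegenerate segment contained in the unit circle $S$. Let $p\in V$ be the center of one of the two circles which contain $[xy]$ as a maximal segment. Let $l$ be any line parallel to $\langle xy\rangle$ such that $p$ lies in the interior of the strip bounded by $\langle xy\rangle$ and $l$. Then $l\cap\mathrm{bis}(x,y)=[x_1y_1]$, where $x_1$ and $y_1$ are the intersection points of the half-lines $[xp\rangle$ and $[yp\rangle$ with $l$, respectively. In particular, $\mathrm{bis}(x,y)$ contains the cone $\mathrm{conv}\big([p(2p-x)\rangle\cup[p(2p-y)\rangle\big)$, and consequently $\mathrm{bis}(x,y)$ has nonempty interior.
   Context: A normed (Minkowski) plane $(V,\|\cdot\|)$ is a two-dimensional real vector space with a norm; $S=\{v:\|v\|=1\}$ is its unit circle. For $x,y\in V$, $[xy]$ denotes the closed segment, $\langle xy\rangle$ the line through $x,y$, and $[xy\rangle$ the closed half-line starting at $x$ through $y$. For distinct $x,y$, $\mathrm{bis}(x,y)=\{z\in V:\|z-x\|=\|z-y\|\}$. A circle with center $c$ and radius $\lambda>0$ is $c+\lambda S$. A maximal segment of a circle is a nondegenerate segment contained in the circle that is not properly contained in any other segment contained in that circle. Fact used in the statement: if $[xy]$ is parallel to a nondegenerate segment of $S$, then there are exactly two circles containing $[xy]$ as a maximal segment, and their centers lie in the two different open half-planes determined by $\langle xy\rangle$. *)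

(* Defs.v *)
(* the normed plane is R^2 = R*R with an arbitrary norm N.
   (Every 2-dimensional real normed space is linearly isometric to such.) *)
From Stdlib Require Import Reals.
Open Scope R_scope.

Definition pt := (R * R)%type.
Definition vadd (u v : pt) : pt := (fst u + fst v, snd u + snd v).
Definition vsub (u v : pt) : pt := (fst u - fst v, snd u - snd v).
Definition vscal (a : R) (u : pt) : pt := (a * fst u, a * snd u).
Definition vzero : pt := (0, 0).
Definition cross (u v : pt) : R := fst u * snd v - snd u * fst v.

Definition is_norm (N : pt -> R) : Prop :=
  (forall v, N v = 0 -> v = vzero) /\
  (forall a v, N (vscal a v) = Rabs a * N v) /\
  (forall u v, N (vadd u v) <= N u + N v).

Definition unit_circle (N : pt -> R) (z : pt) : Prop := N z = 1.
Definition circle (N : pt -> R) (c : pt) (lam : R) (z : pt) : Prop :=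
  N (vsub z c) = lam.

Definition seg (x y z : pt) : Prop :=
  exists t, 0 <= t <= 1 /\ z = vadd (vscal (1 - t) x) (vscal t y).
Definition halfline (x y z : pt) : Prop :=
  exists t, 0 <= t /\ z = vadd x (vscal t (vsub y x)).
Definition line_dir (q d z : pt) : Prop :=
  exists t, z = vadd q (vscal t d).

Definition subset (A B : pt -> Prop) : Prop := forall z, A z -> B z.
Definition set_eq (A B : pt -> Prop) : Prop := forall z, A z <-> B z.

Definition max_seg (C : pt -> Prop) (u v : pt) : Prop :=
  u <> v /\ subset (seg u v) C /\
  forall a b, a <> b -> subset (seg a b) C -> subset (seg u v) (seg a b) ->
    subset (seg a b) (seg u v).

Definition parallel_to_seg_of_S (N : pt -> R) (x y : pt) : Prop :=
  exists a b, a <> b /\ subset (seg a b) (unit_circle N) /\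
    cross (vsub y x) (vsub b a) = 0.

Definition bis (N : pt -> R) (x y z : pt) : Prop :=
  N (vsub z x) = N (vsub z y).

(* p lies in the interior of the strip bounded by <xy> and the line through q
   parallel to <xy>: its signed position relative to <xy> lies strictly between
   that of <xy> (= 0) and that of the line through q. *)
Definition in_open_strip (x y q p : pt) : Prop :=
  let s := fun z => cross (vsub y x) (vsub z x) in
  (0 < s p /\ s p < s q) \/ (s q < s p /\ s p < 0).

Definition convex (C : pt -> Prop) : Prop :=
  forall u v t, C u -> C v -> 0 <= t <= 1 ->
    C (vadd (vscal (1 - t) u) (vscal t v)).
Definition conv (A : pt -> Prop) (z : pt) : Prop :=
  forall C, convex C -> subset A C -> C z.

Definition has_nonempty_interior (N : pt -> R) (A : pt -> Prop) : Prop :=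
  exists z eps, 0 < eps /\ forall w, N (vsub w z) < eps -> A w.

(* Main.v *)
Require Import Defs.
From Stdlib Require Import Reals Lra Psatz.
Open Scope R_scope.

Ltac pteq := repeat match goal with | [ p : pt |- _ ] => destruct p end;
  unfold vadd, vsub, vscal, vzero in *; simpl in *; f_equal.

Ltac ptR := repeat match goal with | [ p : pt |- _ ] => destruct p end;
  unfold vadd, vsub, vscal, vzero in *; simpl in *.

Definition lc (a : R) (u : pt) (b : R) (v : pt) := vadd (vscal a u) (vscal b v).
Definition P (x y : pt) (s : R) := vadd x (vscal s (vsub y x)).

Lemma N_scal N a w : is_norm N -> N (vscal a w) = Rabs a * N w.
Proof. intros [_ [H _]]; apply H. Qed.
Lemma N_tri N a b : is_norm N -> N (vadd a b) <= N a + N b.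
Proof. intros [_ [_ H]]; apply H. Qed.
Lemma N_0 N : is_norm N -> N vzero = 0.
Proof. intros HN. replace vzero with (vscal 0 vzero) by (pteq; ring).
  rewrite N_scal by auto. rewrite Rabs_R0; ring. Qed.
Lemma N_opp N w : is_norm N -> N (vscal (-1) w) = N w.
Proof. intros HN. rewrite N_scal by auto. rewrite Rabs_left by lra; ring. Qed.
Lemma N_ge0 N w : is_norm N -> 0 <= N w.
Proof. intros HN. assert (H := N_tri N w (vscal (-1) w) HN).
  replace (vadd w (vscal (-1) w)) with vzero in H by (pteq; ring).
  rewrite N_0, N_opp in H by auto. lra. Qed.
Lemma N_pos N w : is_norm N -> w <> vzero -> 0 < N w.
Proof. intros HN Hw. destruct (N_ge0 N w HN) as [H|H]; auto.
  exfalso; apply Hw. destruct HN as [H0 _]; auto. Qed.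
Lemma N_conv N a b t : is_norm N -> 0 <= t <= 1 ->
  N (vadd (vscal (1-t) a) (vscal t b)) <= (1-t) * N a + t * N b.
Proof. intros HN Ht. eapply Rle_trans; [apply N_tri; auto|].
  rewrite !N_scal by auto. rewrite !Rabs_pos_eq by lra. lra. Qed.

Lemma P_affine x y s1 s2 r :
  vadd (vscal (1-r) (P x y s1)) (vscal r (P x y s2)) = P x y ((1-r)*s1 + r*s2).
Proof. unfold P; pteq; ring. Qed.

Lemma P_inj x y s s' : x <> y -> P x y s = P x y s' -> s = s'.
Proof. intros Hxy H. unfold P in H. destruct x as [x1 x2], y as [y1 y2].
  unfold vadd, vscal, vsub in H; simpl in H. injection H as H1 H2.
  destruct (Req_dec s s') as [|Hne]; auto. exfalso; apply Hxy.
  assert (y1 - x1 = 0). { apply (Rmult_eq_reg_l (s - s')). lra. lra. }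
  assert (y2 - x2 = 0). { apply (Rmult_eq_reg_l (s - s')). lra. lra. }
  f_equal; lra. Qed.

Lemma P0 x y : P x y 0 = x. Proof. unfold P; pteq; ring. Qed.
Lemma P1 x y : P x y 1 = y. Proof. unfold P; pteq; ring. Qed.

Definition convexf (f : R -> R) := forall s1 s2 r, 0 <= r <= 1 ->
  f ((1-r)*s1 + r*s2) <= (1-r) * f s1 + r * f s2.

Lemma convex_ge f L : convexf f -> (forall s, 0 <= s <= 1 -> f s = L) ->
  forall s, L <= f s.
Proof. intros Hc Hf s.
  destruct (Rle_dec 0 s) as [Hs0|Hs0]; [destruct (Rle_dec s 1) as [Hs1|Hs1]|].
  - rewrite Hf; lra.
  - set (r := (1/2)/(s - 1/2)).
    assert (Hr' : r * (s - 1/2) = 1/2) by (unfold r; field; lra).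
    assert (Hr : 0 < r <= 1) by nra.
    assert (H := Hc (1/2) s r ltac:(lra)).
    replace ((1-r)*(1/2) + r*s) with 1 in H by (unfold r; field; lra).
    rewrite !Hf in H by lra. nra.
  - set (r := (-s)/(1/2 - s)).
    assert (Hr' : r * (1/2 - s) = -s) by (unfold r; field; lra).
    assert (Hr : 0 <= r < 1) by nra.
    assert (H := Hc s (1/2) r ltac:(lra)).
    replace ((1-r)*s + r*(1/2)) with 0 in H by (unfold r; field; lra).
    rewrite (Hf 0), (Hf (1/2)) in H by lra. nra.
Qed.

Lemma fconv N x y p : is_norm N -> convexf (fun s => N (vsub (P x y s) p)).
Proof. intros HN s1 s2 r Hr.
  replace (vsub (P x y ((1-r)*s1 + r*s2)) p) with
    (vadd (vscal (1-r) (vsub (P x y s1) p)) (vscal r (vsub (P x y s2) p)))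
    by (unfold P; pteq; ring).
  apply N_conv; auto. Qed.

Lemma seg_P x y s : 0 <= s <= 1 -> seg x y (P x y s).
Proof. intros Hs. exists s; split; auto. unfold P; pteq; ring. Qed.

Lemma circ_on N x y p lam : max_seg (circle N p lam) x y ->
  forall s, 0 <= s <= 1 -> N (vsub (P x y s) p) = lam.
Proof. intros [_ [Hsub _]] s Hs. apply (Hsub _ (seg_P x y s Hs)). Qed.

Lemma strict_out N x y p lam : is_norm N -> max_seg (circle N p lam) x y ->
  forall t, (t < 0 \/ 1 < t) -> lam < N (vsub (P x y t) p).
Proof. intros HN Hm t Ht.
  set (f := fun s => N (vsub (P x y s) p)).
  assert (Hc : convexf f) by (apply fconv; auto).
  assert (Hf : forall s, 0 <= s <= 1 -> f s = lam) by (intros; apply (circ_on N x y p lam Hm); auto).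
  assert (Hge := convex_ge f lam Hc Hf).
  change (lam < f t). destruct (Rlt_le_dec lam (f t)) as [|Hle]; auto. exfalso.
  destruct Hm as [Hxy [Hsub Hmax]].
  destruct Ht as [Ht|Ht].
  - (* extend to the left: segment [P t, y] *)
    assert (Hflat : forall s, t <= s <= 1 -> f s = lam).
    { intros s Hs. apply Rle_antisym; [|apply Hge].
      destruct (Rle_dec s 1) as [_|]; [|lra].
      set (r := (s - t)/(1 - t)).
      assert (Hr' : r * (1 - t) = s - t) by (unfold r; field; lra).
      assert (Hr : 0 <= r <= 1) by nra.
      assert (H := Hc t 1 r Hr).
      replace ((1-r)*t + r*1) with s in H by nra.
      rewrite (Hf 1) in H by lra. nra. }
    assert (Hne : P x y t <> y).
    { intro E. rewrite <- (P1 x y) in E at 2. apply P_inj in E; auto. lra. }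
    assert (H1 : subset (seg (P x y t) y) (circle N p lam)).
    { intros z [r [Hr ->]]. rewrite <- (P1 x y) at 2. rewrite P_affine.
      unfold circle. apply (Hflat ((1-r)*t + r*1)). nra. }
    assert (H2 : subset (seg x y) (seg (P x y t) y)).
    { intros z [r [Hr ->]]. exists ((r - t)/(1 - t)). split.
      - split. apply Rmult_le_reg_r with (1 - t); [lra|]. unfold Rdiv; field_simplify; lra.
        apply Rmult_le_reg_r with (1 - t); [lra|]. unfold Rdiv; field_simplify; lra.
      - unfold P; pteq; field; lra. }
    assert (H3 := Hmax _ _ Hne H1 H2 (P x y t)).
    destruct H3 as [r [Hr E]].
    + exists 0. split; [lra|]. unfold P; pteq; ring.
    + assert (E' : P x y t = P x y r) by (rewrite E; unfold P; pteq; ring).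
      apply P_inj in E'; auto. lra.
  - assert (Hflat : forall s, 0 <= s <= t -> f s = lam).
    { intros s Hs. apply Rle_antisym; [|apply Hge].
      set (r := s / t).
      assert (Hr' : r * t = s) by (unfold r; field; lra).
      assert (Hr : 0 <= r <= 1) by nra.
      assert (H := Hc 0 t r Hr).
      replace ((1-r)*0 + r*t) with s in H by nra.
      rewrite (Hf 0) in H by lra. nra. }
    assert (Hne : x <> P x y t).
    { intro E. rewrite <- (P0 x y) in E at 1. apply P_inj in E; auto. lra. }
    assert (H1 : subset (seg x (P x y t)) (circle N p lam)).
    { intros z [r [Hr ->]]. rewrite <- (P0 x y) at 1. rewrite P_affine.
      unfold circle. apply (Hflat ((1-r)*0 + r*t)). nra. }
    assert (H2 : subset (seg x y) (seg x (P x y t))).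
    { intros z [r [Hr ->]]. exists (r / t). split.
      - split. apply Rmult_le_reg_r with t; [lra|]. unfold Rdiv; field_simplify; lra.
        apply Rmult_le_reg_r with t; [lra|]. unfold Rdiv; field_simplify; lra.
      - unfold P; pteq; field; lra. }
    assert (H3 := Hmax _ _ Hne H1 H2 (P x y t)).
    destruct H3 as [r [Hr E]].
    + exists 1. split; [lra|]. unfold P; pteq; ring.
    + assert (E' : P x y t = P x y r) by (rewrite E; unfold P; pteq; ring).
      apply P_inj in E'; auto. lra.
Qed.

Definition segprop N u v lam := forall a b, 0 <= a -> 0 <= b ->
  N (lc a u b v) = (a+b)*lam.
Definition strictprop N u v lam := forall a b, 0 < a + b -> (a < 0 \/ b < 0) ->
  (a+b)*lam < N (lc a u b v).

Lemma lc_P x y p a b : a + b <> 0 ->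
  lc a (vsub x p) b (vsub y p) = vscal (a+b) (vsub (P x y (b/(a+b))) p).
Proof. intros H. unfold lc, P; pteq; field; auto. Qed.

Lemma get_segprop N x y p lam : is_norm N -> max_seg (circle N p lam) x y ->
  segprop N (vsub x p) (vsub y p) lam.
Proof. intros HN Hm a b Ha Hb.
  destruct (Req_dec (a+b) 0) as [E|E].
  - assert (a = 0) by lra. assert (b = 0) by lra. subst.
    replace (lc 0 (vsub x p) 0 (vsub y p)) with vzero by (unfold lc; pteq; ring).
    rewrite N_0 by auto. ring.
  - rewrite lc_P by auto. rewrite N_scal by auto. rewrite Rabs_pos_eq by lra.
    rewrite (circ_on N x y p lam Hm); auto.
    split. apply Rmult_le_reg_r with (a+b); [lra|]. unfold Rdiv; field_simplify; lra.
    apply Rmult_le_reg_r with (a+b); [lra|]. unfold Rdiv; field_simplify; lra.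
Qed.

Lemma get_strictprop N x y p lam : is_norm N -> max_seg (circle N p lam) x y ->
  strictprop N (vsub x p) (vsub y p) lam.
Proof. intros HN Hm a b Hab Hneg.
  rewrite lc_P by lra. rewrite N_scal by auto. rewrite Rabs_pos_eq by lra.
  apply Rmult_lt_compat_l; auto.
  apply strict_out with (1 := HN) (2 := Hm).
  assert (Hr : b / (a+b) * (a+b) = b) by (field; lra).
  destruct Hneg; [right|left]; nra.
Qed.

Lemma lc_swap a u b v : lc a u b v = lc b v a u.
Proof. unfold lc; pteq; ring. Qed.
Lemma segprop_swap N u v lam : segprop N u v lam -> segprop N v u lam.
Proof. intros H a b Ha Hb. rewrite lc_swap, H by auto. ring. Qed.
Lemma strictprop_swap N u v lam : strictprop N u v lam -> strictprop N v u lam.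
Proof. intros H a b Hab Hn. rewrite lc_swap. replace (a+b) with (b+a) by ring.
  apply H; [lra| tauto]. Qed.

Lemma excl N u v lam al be : is_norm N -> segprop N u v lam -> strictprop N u v lam ->
  0 <= al + be -> be < 0 -> N (lc al u (be+1) v) < N (lc (al+1) u be v).
Proof. intros HN Hs Ht Hab Hb.
  assert (G0 : (al+1+be)*lam < N (lc (al+1) u be v)) by (apply Ht; lra).
  destruct (Rle_dec be (-1)) as [Hb1|Hb1].
  - set (r := -1/be).
    assert (Hr' : r * be = -1) by (unfold r; field; lra).
    assert (Hr : 0 < r <= 1) by nra.
    replace (lc al u (be+1) v) with
      (vadd (vscal (1-r) (lc (al+1) u be v)) (vscal r (lc (al+1+be) u 0 v)))
      by (unfold lc, r; pteq; field; lra).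
    eapply Rle_lt_trans; [apply N_conv; auto; lra|].
    rewrite (Hs (al+1+be) 0) by lra. nra.
  - rewrite Hs by lra. replace (al + (be+1)) with (al+1+be) by ring. lra.
Qed.

Lemma lb_pos N u v lam a b : is_norm N -> N u = lam -> N v = lam -> 0 < lam ->
  0 < a -> b < 0 -> a * (N (vsub u v) / 2) <= N (lc a u b v).
Proof. intros HN Hu Hv Hl Ha Hb.
  set (t := -b/a).
  assert (Ht' : t * a = -b) by (unfold t; field; lra).
  assert (Ht : 0 < t) by nra.
  replace (lc a u b v) with (vscal a (vsub u (vscal t v))) by (unfold lc, t; pteq; field; lra).
  rewrite N_scal by auto. rewrite Rabs_pos_eq by lra.
  apply Rmult_le_compat_l; [lra|].
  set (psi := N (vsub u (vscal t v))).
  assert (B1 : lam <= psi + t * lam).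
  { assert (H := N_tri N (vsub u (vscal t v)) (vscal t v) HN).
    replace (vadd (vsub u (vscal t v)) (vscal t v)) with u in H by (pteq; ring).
    rewrite N_scal in H by auto. rewrite Rabs_pos_eq in H by lra. fold psi in H. rewrite Hu, Hv in H. lra. }
  assert (B2 : t * lam <= lam + psi).
  { assert (H := N_tri N u (vscal (-1) (vsub u (vscal t v))) HN).
    replace (vadd u (vscal (-1) (vsub u (vscal t v)))) with (vscal t v) in H by (pteq; ring).
    rewrite N_opp, N_scal, Rabs_pos_eq, Hv, Hu in H by (auto; lra). exact H. }
  assert (B3 : N (vsub u v) <= psi + Rabs (t - 1) * lam).
  { assert (H := N_tri N (vsub u (vscal t v)) (vscal (t-1) v) HN).
    replace (vadd (vsub u (vscal t v)) (vscal (t - 1) v)) with (vsub u v) in H by (pteq; ring).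
    rewrite N_scal, Hv in H by auto. exact H. }
  destruct (Rle_dec (Rabs (t-1) * lam) (N (vsub u v) / 2)).
  - lra.
  - destruct (Rle_dec 1 t).
    + rewrite Rabs_pos_eq in n by lra. nra.
    + rewrite Rabs_left in n by lra. nra.
Qed.

Lemma lb_a N u v lam c a b : is_norm N -> segprop N u v lam -> 0 < lam ->
  0 < c -> c <= lam -> c <= N (vsub u v) / 2 -> c * Rabs a <= N (lc a u b v).
Proof. intros HN Hs Hl Hc1 Hc2 Hc3.
  assert (Hu : N u = lam). { replace u with (lc 1 u 0 v) at 1 by (unfold lc; pteq; ring).
    rewrite Hs by lra. ring. }
  assert (Hv : N v = lam). { replace v with (lc 0 u 1 v) at 1 by (unfold lc; pteq; ring).
    rewrite Hs by lra. ring. }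
  destruct (Rle_dec 0 a) as [Ha|Ha%Rnot_le_lt]; destruct (Rle_dec 0 b) as [Hb|Hb%Rnot_le_lt].
  - rewrite Hs, Rabs_pos_eq by auto. nra.
  - destruct Ha as [Ha|Ha].
    + rewrite Rabs_pos_eq by lra. eapply Rle_trans; [|apply (lb_pos N u v lam); auto; lra]. nra.
    + subst. rewrite Rabs_R0. rewrite Rmult_0_r. apply N_ge0; auto.
  - replace (lc a u b v) with (vscal (-1) (lc (-a) u (-b) v)) by (unfold lc; pteq; ring).
    rewrite N_opp by auto. rewrite Rabs_left by lra.
    destruct Hb as [Hb|Hb].
    + eapply Rle_trans; [|apply (lb_pos N u v lam); auto; lra]. nra.
    + rewrite Hs by lra. nra.
  - replace (lc a u b v) with (vscal (-1) (lc (-a) u (-b) v)) by (unfold lc; pteq; ring).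
    rewrite N_opp by auto. rewrite Hs, Rabs_left by lra. nra.
Qed.

Lemma lb_b N u v lam c a b : is_norm N -> segprop N u v lam -> 0 < lam ->
  0 < c -> c <= lam -> c <= N (vsub u v) / 2 -> c * Rabs b <= N (lc a u b v).
Proof. intros HN Hs Hl Hc1 Hc2 Hc3. rewrite lc_swap.
  apply lb_a with lam; auto. apply segprop_swap; auto.
  replace (vsub v u) with (vscal (-1) (vsub u v)) by (pteq; ring). rewrite N_opp; auto.
Qed.

Lemma decomp u v w : cross u v <> 0 ->
  w = lc (cross w v / cross u v) u (cross u w / cross u v) v.
Proof. intros H. unfold lc, cross in *; pteq; field; auto. Qed.

Lemma lc_exists u v w : cross u v <> 0 -> exists a b, w = lc a u b v.
Proof. intros H. exists (cross w v / cross u v), (cross u w / cross u v).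
  apply decomp; auto. Qed.

Lemma cone_bis N x y p lam a b : is_norm N -> segprop N (vsub x p) (vsub y p) lam ->
  0 <= a -> 0 <= b -> bis N x y (vsub p (lc a (vsub x p) b (vsub y p))).
Proof. intros HN Hs Ha Hb. unfold bis.
  replace (vsub (vsub p (lc a (vsub x p) b (vsub y p))) x) with
    (vscal (-1) (lc (a+1) (vsub x p) b (vsub y p))) by (unfold lc; pteq; ring).
  replace (vsub (vsub p (lc a (vsub x p) b (vsub y p))) y) with
    (vscal (-1) (lc a (vsub x p) (b+1) (vsub y p))) by (unfold lc; pteq; ring).
  rewrite !N_opp by auto. rewrite !Hs by lra. ring. Qed.

Lemma line_char q d z : d <> vzero -> (line_dir q d z <-> cross d (vsub z q) = 0).
Proof. intros Hd. split.
  - intros [t ->]. unfold cross; pteq; ring.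
  - intros H. exists ((fst d * fst (vsub z q) + snd d * snd (vsub z q)) /
                      (fst d * fst d + snd d * snd d)).
    destruct d as [d1 d2], z as [z1 z2], q as [q1 q2].
    unfold cross, vsub, vadd, vscal, vzero in *; simpl in *.
    assert (Hpos : 0 < d1 * d1 + d2 * d2).
    { destruct (Req_dec d1 0); destruct (Req_dec d2 0); try nra.
      subst; exfalso; apply Hd; auto. }
    f_equal; field_simplify_eq; try lra;
    [assert (E : d2 * (d1 * (z2 - q2) - d2 * (z1 - q1)) = 0) by (rewrite H; ring)|
     assert (E : d1 * (d1 * (z2 - q2) - d2 * (z1 - q1)) = 0) by (rewrite H; ring)]; lra.
Qed.

Theorem proposition2p3 (N : pt -> R) (x y p q : pt) (lam : R) :
  is_norm N ->
  x <> y ->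
  parallel_to_seg_of_S N x y ->
  0 < lam ->
  max_seg (circle N p lam) x y ->
  in_open_strip x y q p ->
  let l := line_dir q (vsub y x) in
  ((exists x1 y1, halfline x p x1 /\ l x1 /\ halfline y p y1 /\ l y1) /\
   (forall x1 y1, halfline x p x1 -> l x1 -> halfline y p y1 -> l y1 ->
      set_eq (fun z => l z /\ bis N x y z) (seg x1 y1))) /\
  subset (conv (fun z => halfline p (vsub (vscal 2 p) x) z \/
                         halfline p (vsub (vscal 2 p) y) z)) (bis N x y) /\
  has_nonempty_interior N (bis N x y).
Proof.
  intros HN Hxy _ Hl Hm Hst l. subst l.
  unfold in_open_strip in Hst; cbv beta zeta in Hst.
  remember (cross (vsub y x) (vsub p x)) as c eqn:Hc.
  remember (cross (vsub y x) (vsub q x)) as sg eqn:Hsg.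
  assert (Hc0 : c <> 0) by lra.
  set (k := sg / c).
  assert (Hkc : k * c = sg) by (unfold k; field; auto).
  assert (Hk1 : 1 < k).
  { destruct Hst as [[H1 H2]|[H1 H2]]; nra. }
  clearbody k.
  assert (Hcuv : cross (vsub x p) (vsub y p) = c) by (subst c; unfold cross; ptR; ring).
  assert (Hd : vsub y x <> vzero).
  { intro E. apply Hxy. destruct x, y; unfold vsub, vzero in E; simpl in E.
    injection E as E1 E2. f_equal; lra. }
  assert (Lchar : forall z, line_dir q (vsub y x) z <-> cross (vsub y x) (vsub z x) = sg).
  { intro z. rewrite line_char by auto.
    assert (E : cross (vsub y x) (vsub z q) = cross (vsub y x) (vsub z x) - sg)
      by (subst sg; unfold cross; ptR; ring).
    rewrite E. split; intro; lra. }
  assert (Hs := get_segprop N x y p lam HN Hm).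
  assert (Ht := get_strictprop N x y p lam HN Hm).
  assert (Hlx : forall t, cross (vsub y x) (vsub (vadd x (vscal t (vsub p x))) x) = t * c)
    by (intro; subst c; unfold cross; ptR; ring).
  assert (Hly : forall t, cross (vsub y x) (vsub (vadd y (vscal t (vsub p y))) x) = t * c)
    by (intro; subst c; unfold cross; ptR; ring).
  assert (Hzc : forall a b,
    cross (vsub y x) (vsub (vsub p (lc a (vsub x p) b (vsub y p))) x) = (a+b+1) * c)
    by (intros; subst c; unfold cross, lc; ptR; ring).
  split; [split|split].
  - exists (vadd x (vscal k (vsub p x))), (vadd y (vscal k (vsub p y))).
    split; [exists k; split; [lra|reflexivity]|].
    split; [apply Lchar; rewrite Hlx; lra|].
    split; [exists k; split; [lra|reflexivity]|].
    apply Lchar; rewrite Hly; lra.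
  - intros x1 y1 [t1 [Ht1 ->]] Hx1 [t2 [Ht2 ->]] Hy1.
    apply Lchar in Hx1. apply Lchar in Hy1. rewrite Hlx in Hx1. rewrite Hly in Hy1.
    assert (t1 = k) by (apply (Rmult_eq_reg_r c); auto; lra).
    assert (t2 = k) by (apply (Rmult_eq_reg_r c); auto; lra). subst t1 t2.
    intro z. split.
    + intros [Hlz Hbz].
      assert (Hcuv' : cross (vsub x p) (vsub y p) <> 0) by (rewrite Hcuv; auto).
      destruct (lc_exists (vsub x p) (vsub y p) (vsub p z) Hcuv') as [al [be Hw]].
      assert (Ez : z = vsub p (lc al (vsub x p) be (vsub y p))).
      { rewrite <- Hw. pteq; ring. }
      rewrite Ez in Hlz, Hbz |- *. apply Lchar in Hlz. rewrite Hzc in Hlz.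
      assert (Hab : al + be = k - 1) by (rewrite <- Hkc in Hlz; apply (Rmult_eq_reg_r c) in Hlz; auto; lra).
      unfold bis in Hbz.
      replace (vsub (vsub p (lc al (vsub x p) be (vsub y p))) x) with
        (vscal (-1) (lc (al+1) (vsub x p) be (vsub y p))) in Hbz by (unfold lc; pteq; ring).
      replace (vsub (vsub p (lc al (vsub x p) be (vsub y p))) y) with
        (vscal (-1) (lc al (vsub x p) (be+1) (vsub y p))) in Hbz by (unfold lc; pteq; ring).
      rewrite !N_opp in Hbz by auto.
      destruct (Rlt_le_dec be 0) as [Hb|Hb].
      { exfalso. assert (H := excl N _ _ lam al be HN Hs Ht ltac:(lra) Hb). lra. }
      destruct (Rlt_le_dec al 0) as [Ha|Ha].
      { exfalso. assert (H := excl N _ _ lam be al HN (segprop_swap _ _ _ _ Hs)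
           (strictprop_swap _ _ _ _ Ht) ltac:(lra) Ha).
        rewrite !(lc_swap _ (vsub y p)) in H. lra. }
      exists (be / (k - 1)). split.
      * split. apply Rmult_le_reg_r with (k-1); [lra|]. unfold Rdiv; field_simplify; lra.
        apply Rmult_le_reg_r with (k-1); [lra|]. unfold Rdiv; field_simplify; lra.
      * assert (al = k - 1 - be) by lra. subst al. unfold lc; pteq; field; lra.
    + intros [r [Hr ->]].
      assert (Ez : vadd (vscal (1 - r) (vadd x (vscal k (vsub p x))))
                        (vscal r (vadd y (vscal k (vsub p y)))) =
                   vsub p (lc ((1-r)*(k-1)) (vsub x p) (r*(k-1)) (vsub y p)))
        by (unfold lc; pteq; ring).
      rewrite Ez. split.
      * apply Lchar. rewrite Hzc. rewrite <- Hkc. ring.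
      * apply cone_bis with lam; auto; nra.
  - intros z Hz. 
    set (C := fun z => exists a b, 0 <= a /\ 0 <= b /\
                       z = vsub p (lc a (vsub x p) b (vsub y p))).
    assert (HC : C z).
    { apply Hz.
      - intros z1 z2 t [a1 [b1 [Ha1 [Hb1 ->]]]] [a2 [b2 [Ha2 [Hb2 ->]]]] Htt.
        exists ((1-t)*a1 + t*a2), ((1-t)*b1 + t*b2). split; [nra|]. split; [nra|].
        unfold lc; pteq; ring.
      - intros w [[t [Ht0 ->]]|[t [Ht0 ->]]].
        + exists t, 0. split; [lra|]. split; [lra|]. unfold lc; pteq; ring.
        + exists 0, t. split; [lra|]. split; [lra|]. unfold lc; pteq; ring. }
    destruct HC as [a [b [Ha [Hb ->]]]]. apply cone_bis with lam; auto.
  - set (m := N (vsub (vsub x p) (vsub y p))).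
    assert (Hm0 : 0 < m).
    { apply N_pos; auto. intro E. apply Hxy. destruct x, y, p.
      unfold vsub, vzero in E; simpl in E. injection E as E1 E2. f_equal; lra. }
    set (eps := Rmin lam (m/2)).
    assert (He0 : 0 < eps) by (apply Rmin_glb_lt; lra).
    assert (He1 : eps <= lam) by apply Rmin_l.
    assert (He2 : eps <= m/2) by apply Rmin_r.
    exists (vsub p (lc 2 (vsub x p) 2 (vsub y p))), eps. split; auto.
    intros w Hw.
    assert (Hcuv' : cross (vsub x p) (vsub y p) <> 0) by (rewrite Hcuv; auto).
    destruct (lc_exists (vsub x p) (vsub y p) (vsub w (vsub p (lc 2 (vsub x p) 2 (vsub y p))))
      Hcuv') as [a [b E]].
    rewrite E in Hw.
    assert (Ha := lb_a N _ _ lam eps a b HN Hs Hl He0 He1 He2).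
    assert (Hb := lb_b N _ _ lam eps a b HN Hs Hl He0 He1 He2).
    assert (Ha' : Rabs a < 1) by nra.
    assert (Hb' : Rabs b < 1) by nra.
    assert (Ew : w = vsub p (lc (2 - a) (vsub x p) (2 - b) (vsub y p))).
    { assert (Hw' : w = vadd (vsub p (lc 2 (vsub x p) 2 (vsub y p)))
                     (vsub w (vsub p (lc 2 (vsub x p) 2 (vsub y p))))) by (unfold lc; pteq; ring).
      rewrite E in Hw'. rewrite Hw'. unfold lc; pteq; ring. }
    rewrite Ew. apply cone_bis with lam; auto.
    + apply Rabs_def2 in Ha'. lra.
    + apply Rabs_def2 in Hb'. lra.
Qed.
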